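(* If a finite symmetric subset $F\subset\mathrm{SL}_3(\mathbb{R})$ satisfies condition $(\ast)$, then $F$ freely generates a free subgroup of $\mathrm{SL}_3(\mathbb{R})$ (every reduced word $g_1\cdots g_n$, $n\ge1$, $g_i\in F$, $g_k\neq g_{k+1}^{-1}$, is non-trivial), and this subgroup is quasi-isometrically embedded in $\mathrm{SL}_3(\mathbb{R})$.
   Context: For $g\in\mathrm{SL}_3(\mathbb{R})$ and a line $L\in\mathbb{RP}^2$, $\|g|_L\|:=\|gv\|/\|v\|$ for any non-zero $v\in L$ (Euclidean norm). A finite symmetric set $F\subset\mathrm{SL}_3(\mathbb{R})$ satisfies condition $(\ast)$ if there exist $c>1$, a line $L_0\in\mathbb{RP}^2$, and for each $g\in F$ a subset $C_g\subset\mathbb{RP}^2$ such that: (i) $C_g\cap C_h=\emptyset$ if $g\ne h$; (ii) $L_0\notin\bigcup_{g\in F}C_g$; (iii) $g\cdot L_0\in C_g$ for all $g\in F$; (iv) $g\cdot C_h\subset C_g$ whenever $g\neq h^{-1}$; (v) $\|g|_L\|\ge c$ for all $L\in\bigcup_{h\ne g^{-1}}C_h$. *)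

(* Defs.v *)
From HB Require Import structures.
From mathcomp Require Import all_boot all_order all_algebra.
From mathcomp Require Import all_classical all_reals.
From mathcomp Require Import exp.
Set Implicit Arguments. Unset Strict Implicit. Unset Printing Implicit Defensive.
Import Order.TTheory GRing.Theory Num.Theory.
Local Open Scope ring_scope.
Local Open Scope classical_set_scope.

Section Defs.
Variable R : realType.

Definition vnorm (v : 'cV[R]_3) : R := Num.sqrt (\sum_(i < 3) v i 0 ^+ 2).

Definition SL3 (g : 'M[R]_3) : Prop := \det g = 1.

(* a set of lines of R^3 (a subset of RP^2), encoded as the set of all
   nonzero vectors spanning one of those lines: it contains only nonzero
   vectors and is invariant under nonzero scaling *)
Definition proj_set (C : set 'cV[R]_3) : Prop :=
  (forall v, C v -> v != 0) /\ (forall v (a : R), C v -> a != 0 -> C (a *: v)).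

Definition finite_symmetric_SL3 (F : set 'M[R]_3) : Prop :=
  finite_set F /\ (forall g, F g -> SL3 g) /\ (forall g, F g -> F (invmx g)).

(* condition (ast); the line L0 is given by a nonzero vector v0,
   the lines L by nonzero vectors v, and ||g|_L|| = ||g v|| / ||v|| *)
Definition condition_ast (F : set 'M[R]_3) : Prop :=
  exists (c : R) (v0 : 'cV[R]_3) (C : 'M[R]_3 -> set 'cV[R]_3),
    1 < c /\ v0 != 0 /\
        (forall g, F g -> proj_set (C g)) /\
        (forall g h, F g -> F h -> g != h -> C g `&` C h = set0) /\
        (forall g, F g -> ~ C g v0) /\
        (forall g, F g -> C g (g *m v0)) /\
        (forall g h, F g -> F h -> g != invmx h ->
           forall v, C h v -> C g (g *m v)) /\
        (forall g, F g -> forall h, F h -> h != invmx g ->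
           forall v, C h v -> c * vnorm v <= vnorm (g *m v)).

Definition word_over (F : set 'M[R]_3) (w : seq 'M[R]_3) : Prop :=
  forall g, g \in w -> F g.

Definition eval_word (w : seq 'M[R]_3) : 'M[R]_3 := \prod_(g <- w) g.

Definition reduced_word (w : seq 'M[R]_3) : Prop :=
  forall k, (k.+1 < size w)%N -> nth 0 w k != invmx (nth 0 w k.+1).

Definition freely_generates (F : set 'M[R]_3) : Prop :=
  forall w, word_over F w -> (0 < size w)%N -> reduced_word w -> eval_word w != 1.

(* the subgroup generated by the (symmetric) set F *)
Definition in_generated (F : set 'M[R]_3) (x : 'M[R]_3) : Prop :=
  exists w, word_over F w /\ eval_word w = x.

Definition word_dist (F : set 'M[R]_3) (x y : 'M[R]_3) (n : nat) : Prop :=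
  (exists w, [/\ word_over F w, size w = n & eval_word w = invmx x *m y]) /\
  (forall w, word_over F w -> eval_word w = invmx x *m y -> (n <= size w)%N).

Definition opnorm (A : 'M[R]_3) : R :=
  sup [set r | exists v : 'cV[R]_3, v != 0 /\ r = vnorm (A *m v) / vnorm v].

(* left-invariant distance on SL_3(R):
   d(g,h) = log ||g^{-1}h|| + log ||h^{-1}g||  (= log(s1/s3) of g^{-1}h);
   this (pseudo)metric is quasi-isometric to any left-invariant Riemannian
   metric on SL_3(R) *)
Definition sl3_dist (g h : 'M[R]_3) : R :=
  ln (opnorm (invmx g *m h)) + ln (opnorm (invmx h *m g)).

Definition qi_embedded (F : set 'M[R]_3) : Prop :=
  exists (lam K : R), 0 < lam /\ 0 <= K /\
    forall x y n, in_generated F x -> in_generated F y -> word_dist F x y n ->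
      n%:R / lam - K <= sl3_dist x y /\ sl3_dist x y <= lam * n%:R + K.

End Defs.

(* Main.v *)
Require Import Defs.
From HB Require Import structures.
From mathcomp Require Import all_boot all_order all_algebra.
From mathcomp Require Import all_classical all_reals.
From mathcomp Require Import exp ring lra zify.
Import Order.TTheory GRing.Theory Num.Theory.
Local Open Scope ring_scope.
Local Open Scope classical_set_scope.

Definition N1 {R : realType} (A : 'M[R]_3) : R := \sum_i \sum_j `|A i j|.

Lemma N1_ge0 (R : realType) (A : 'M[R]_3) : 0 <= N1 A.
Proof. by apply: sumr_ge0 => i _; apply: sumr_ge0 => j _. Qed.

Lemma vnorm_ge0 (R : realType) (v : 'cV[R]_3) : 0 <= vnorm v.
Proof. exact: sqrtr_ge0. Qed.

Lemma abs_le_vnorm (R : realType) (v : 'cV[R]_3) i : `|v i 0| <= vnorm v.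
Proof.
rewrite /vnorm -sqrtr_sqr ler_wsqrtr // (bigD1 i) //= lerDl.
by apply: sumr_ge0 => j _; rewrite sqr_ge0.
Qed.

Lemma vnorm_le_sum (R : realType) (v : 'cV[R]_3) : vnorm v <= \sum_i `|v i 0|.
Proof.
have h0 : 0 <= \sum_i `|v i 0| by apply: sumr_ge0.
rewrite /vnorm -(ger0_norm h0) -sqrtr_sqr ler_wsqrtr //.
rewrite !big_ord_recr /= !big_ord0 /= !add0r.
set a := v _ 0; set b := v _ 0; set c := v _ 0.
have ha := normr_ge0 a; have hb := normr_ge0 b; have hc := normr_ge0 c.
rewrite -(real_normK (num_real a)) -(real_normK (num_real b)) -(real_normK (num_real c)).
nra.
Qed.

Lemma vnorm_gt0 (R : realType) (v : 'cV[R]_3) : v != 0 -> 0 < vnorm v.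
Proof.
move=> nz; rewrite /vnorm sqrtr_gt0 lt_def sumr_ge0 ?andbT; last by move=> i _; rewrite sqr_ge0.
apply: contra nz; rewrite psumr_eq0; last by move=> i _; rewrite sqr_ge0.
move=> /allP H; apply/eqP/matrixP => i j; rewrite ord1 mxE.
by have /= := H i (mem_index_enum _); rewrite sqrf_eq0 => /eqP.
Qed.

Lemma vnorm_mul (R : realType) (A : 'M[R]_3) v : vnorm (A *m v) <= N1 A * vnorm v.
Proof.
apply: (le_trans (vnorm_le_sum _ (A *m v))).
rewrite /N1 mulr_suml; apply: ler_sum => i _.
rewrite mxE mulr_suml; apply: le_trans (ler_norm_sum _ _ _) _.
apply: ler_sum => j _; rewrite normrM; apply: ler_wpM2l => //.
exact: abs_le_vnorm.
Qed.

Definition e0 {R : realType} : 'cV[R]_3 := delta_mx 0 0.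
Lemma e0_neq0 (R : realType) : (e0 : 'cV[R]_3) != 0.
Proof. apply/eqP => /matrixP /(_ 0 0); rewrite !mxE /= => /eqP; by rewrite oner_eq0. Qed.

Lemma opnorm_ge (R : realType) (A : 'M[R]_3) v : v != 0 ->
  vnorm (A *m v) / vnorm v <= opnorm A.
Proof.
move=> nz; apply: sup_upper_bound; last by exists v.
split; first by exists (vnorm (A *m e0) / vnorm e0), e0; split => //; exact: e0_neq0.
exists (N1 A) => r [u [un ->]].
by rewrite ler_pdivrMr ?vnorm_gt0 // vnorm_mul.
Qed.

Lemma opnorm_le (R : realType) (A : 'M[R]_3) B :
  (forall v, v != 0 -> vnorm (A *m v) <= B * vnorm v) -> opnorm A <= B.
Proof.
move=> H; apply: ge_sup.
  by exists (vnorm (A *m e0) / vnorm e0), e0; split => //; exact: e0_neq0.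
by move=> r [u [un ->]]; rewrite ler_pdivrMr ?vnorm_gt0 // H.
Qed.
Set Implicit Arguments. Unset Strict Implicit.

Lemma eval_nil (R : realType) : eval_word (R:=R) [::] = 1.
Proof. by rewrite /eval_word big_nil. Qed.

Lemma eval_cons (R : realType) (g : 'M[R]_3) w : eval_word (g :: w) = g *m eval_word w.
Proof. by rewrite /eval_word big_cons. Qed.

Lemma eval_cat (R : realType) (w1 w2 : seq 'M[R]_3) :
  eval_word (w1 ++ w2) = eval_word w1 *m eval_word w2.
Proof. by rewrite /eval_word big_cat. Qed.

Lemma word_over_cons (R : realType) F (g : 'M[R]_3) w :
  word_over F (g :: w) -> F g /\ word_over F w.
Proof.
move=> H; split; first by apply: H; rewrite mem_head.
by move=> h hw; apply: H; rewrite in_cons hw orbT.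
Qed.

Lemma eval_unit (R : realType) F (w : seq 'M[R]_3) :
  (forall g, F g -> g \in unitmx) -> word_over F w -> eval_word w \in unitmx.
Proof.
move=> U; elim: w => [|g w IH] H.
  by rewrite eval_nil unitmx1.
have [Fg Fw] := word_over_cons H.
by rewrite eval_cons unitmx_mul U // IH.
Qed.

Lemma eval_mulv (R : realType) F (M : R) (w : seq 'M[R]_3) v :
  0 <= M -> (forall g, F g -> N1 g <= M) -> word_over F w ->
  vnorm (eval_word w *m v) <= M ^+ size w * vnorm v.
Proof.
move=> M0 HM; elim: w v => [|g w IH] v H.
  by rewrite eval_nil mul1mx expr0 mul1r.
have [Fg Fw] := word_over_cons H.
rewrite eval_cons -mulmxA /= exprS -mulrA.
apply: le_trans (vnorm_mul _ _ _) _.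
apply: le_trans (ler_wpM2r (vnorm_ge0 _ _) (HM _ Fg)) _.
by apply: ler_wpM2l => //; apply: IH.
Qed.

Lemma geo_reduced (R : realType) F (w : seq 'M[R]_3) :
  (forall g, F g -> g \in unitmx) -> word_over F w ->
  (forall u, word_over F u -> eval_word u = eval_word w -> (size w <= size u)%N) ->
  reduced_word w.
Proof.
move=> U Fw G k hk; apply/negP => /eqP E.
pose u := take k w ++ drop k.+2 w.
have hk' : (k < size w)%N by apply: ltnW.
have Fu : word_over F u.
  move=> g; rewrite mem_cat => /orP [] hg; apply: Fw.
    exact: mem_take hg.
  exact: mem_drop hg.
have Eu : eval_word u = eval_word w.
  rewrite -[in RHS](cat_take_drop k w).
  rewrite (drop_nth 0 hk') (drop_nth 0 hk) !eval_cat !eval_cons E mulmxA.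
  rewrite -[_ *m invmx _ *m _]mulmxA [invmx _ *m (_ *m _)]mulmxA mulVmx ?mul1mx //.
  by apply: U; apply: Fw; apply: mem_nth.
have := G u Fu Eu; rewrite size_cat size_take size_drop hk'.
lia.
Qed.

Definition iw (R : realType) (w : seq 'M[R]_3) := rev (map invmx w).

Lemma iw_over (R : realType) F (w : seq 'M[R]_3) :
  (forall g, F g -> F (invmx g)) -> word_over F w -> word_over F (iw w).
Proof.
move=> S Fw g; rewrite mem_rev => /mapP [h hw ->]; apply: S; exact: Fw.
Qed.

Lemma iw_size (R : realType) (w : seq 'M[R]_3) : size (iw w) = size w.
Proof. by rewrite /iw size_rev size_map. Qed.

Lemma iw_eval (R : realType) F (w : seq 'M[R]_3) :
  (forall g, F g -> g \in unitmx) -> word_over F w ->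
  eval_word (iw w) = invmx (eval_word w).
Proof.
move=> U; elim: w => [|g w IH] H.
  by rewrite /iw /= eval_nil -[invmx 1]/((1 : 'M[R]_3)^-1) invr1.
have [Fg Fw] := word_over_cons H.
rewrite /iw map_cons rev_cons -cats1 eval_cat -/(iw w) IH //.
rewrite eval_cons /eval_word big_seq1.
have u1 : (g : 'M[R]_3) \is a GRing.unit by apply: U.
have u2 : (eval_word w : 'M[R]_3) \is a GRing.unit by apply: (eval_unit U).
by rewrite -[invmx (g *m _)]/((g * eval_word w)^-1) invrM.
Qed.

Lemma pingpong (R : realType) (F : set 'M[R]_3) (c M : R) v0 C :
  0 <= c -> 0 <= M ->
  (forall g, F g -> C g (g *m v0)) ->
  (forall g h, F g -> F h -> g != invmx h -> forall v, C h v -> C g (g *m v)) ->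
  (forall g, F g -> forall h, F h -> h != invmx g ->
           forall v, C h v -> c * vnorm v <= vnorm (g *m v)) ->
  (forall g, F g -> vnorm v0 <= M * vnorm (g *m v0)) ->
  forall w g, word_over F (g :: w) -> reduced_word (g :: w) ->
  C g (eval_word (g :: w) *m v0) /\
  c ^+ size w * vnorm v0 <= M * vnorm (eval_word (g :: w) *m v0).
Proof.
move=> c0 M0 h3 h4 h5 hM; elim=> [|h w IH] g Fw red.
  have [Fg _] := word_over_cons Fw.
  rewrite eval_cons eval_nil mulmx1 expr0 mul1r; split; [exact: h3 | exact: hM].
have [Fg Fw'] := word_over_cons Fw.
have [Fh _] := word_over_cons Fw'.
have red' : reduced_word (h :: w).
  by move=> k hk; apply: (red k.+1).
have [IH1 IH2] := IH h Fw' red'.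
have gh : g != invmx h by apply: (red 0%N).
have hg : h != invmx g.
  by apply: contra gh => /eqP ->; rewrite invmxK.
rewrite eval_cons -mulmxA; split; first exact: h4 IH1.
have := h5 g Fg h Fh hg _ IH1.
set u := vnorm (eval_word (h :: w) *m v0) => Hu.
rewrite /= exprS -mulrA.
apply: le_trans (ler_wpM2l c0 IH2) _.
rewrite mulrCA; apply: ler_wpM2l => //.
Qed.

Lemma mem_le_sum (R : realType) (f : 'M[R]_3 -> R) s x :
  (forall y, 0 <= f y) -> x \in s -> f x <= \sum_(y <- s) f y.
Proof.
move=> f0; elim: s => [//|y s IH]; rewrite in_cons big_cons => /orP [/eqP ->|xs].
  by rewrite lerDl sumr_ge0.
by apply: le_trans (IH xs) _; rewrite lerDr.
Qed.

Theorem mainTheorem10 (R : realType) (F : set 'M[R]_3) :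
  finite_symmetric_SL3 F -> condition_ast F ->
  freely_generates F /\ qi_embedded F.
Proof.
move=> [fin [sl sym]] [c [v0 [C [c1 [v0nz [_ [_ [ii [iii [iv v]]]]]]]]]].
have U : forall g, F g -> g \in unitmx.
  by move=> g /sl; rewrite /SL3 unitmxE => ->; exact: unitr1.
have [s Fs] := (finite_seqP F).1 fin.
pose M := 1 + \sum_(g <- s) N1 g.
have M1 : 1 <= M by rewrite lerDl sumr_ge0 // => g _; exact: N1_ge0.
have Mp : 0 < M by apply: lt_le_trans M1.
have M0 : 0 <= M by apply: ltW.
have HM : forall g, F g -> N1 g <= M.
  move=> g; rewrite Fs /= => gs.
  by apply: le_trans (mem_le_sum (N1_ge0 R) gs) _; rewrite lerDr.
have hM0 : forall g, F g -> vnorm v0 <= M * vnorm (g *m v0).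
  move=> g Fg.
  have e : v0 = invmx g *m (g *m v0) by rewrite mulmxA mulVmx ?mul1mx // U.
  rewrite {1}e; apply: le_trans (vnorm_mul _ _ _) _.
  apply: ler_wpM2r; [exact: vnorm_ge0 | apply: HM; exact: sym].
have c0 : 0 <= c by apply: ltW (lt_trans ltr01 c1).
have PP := pingpong c0 M0 iii iv v hM0.
split.
  move=> [|g w] // wo _ red; apply/eqP => E.
  have [Cg _] := PP w g wo red.
  rewrite E mul1mx in Cg.
  by apply: (ii g (wo g (mem_head _ _))) Cg.
have low : forall w, word_over F w ->
    (forall u, word_over F u -> eval_word u = eval_word w -> (size w <= size u)%N) ->
    c ^+ (size w).-1 / M <= opnorm (eval_word w).
  move=> [|g w] Fw G.
    have O := opnorm_ge R (eval_word [::]) v0 v0nz.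
    apply: (le_trans _ O).
    rewrite eval_nil mul1mx divff ?gt_eqF ?vnorm_gt0 // expr0 mul1r.
    by rewrite invr_le1 ?unitfE ?gt_eqF.
  have red := geo_reduced U Fw G.
  have [_ H2] := PP w g Fw red.
  apply: (le_trans _ (opnorm_ge R (eval_word (g :: w)) v0 v0nz)).
  rewrite /= ler_pdivlMr ?vnorm_gt0 // mulrAC ler_pdivrMr // mulrC.
  by rewrite mulrC [X in _ <= X]mulrC.
have upp : forall w, word_over F w -> opnorm (eval_word w) <= M ^+ size w.
  by move=> w Fw; apply: opnorm_le => u _; exact: eval_mulv M0 HM Fw.
have lnb : forall w, word_over F w ->
    (forall u, word_over F u -> eval_word u = eval_word w -> (size w <= size u)%N) ->
    ((size w).-1%:R * ln c - ln M <= ln (opnorm (eval_word w))) /\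
    (ln (opnorm (eval_word w)) <= (size w)%:R * ln M).
  move=> w Fw G.
  have cp : 0 < c by apply: lt_trans ltr01 c1.
  have pos : 0 < c ^+ (size w).-1 / M by rewrite divr_gt0 // exprn_gt0.
  have L := low w Fw G.
  have op : 0 < opnorm (eval_word w) by apply: lt_le_trans L.
  split.
    have : ln (c ^+ (size w).-1 / M) <= ln (opnorm (eval_word w)).
      by rewrite ler_ln ?posrE.
    have MP : M \is Num.pos by rewrite posrE.
    by rewrite lnM ?posrE ?invr_gt0 ?exprn_gt0 // (lnV MP) (lnXn _ cp) mulr_natl.
  have : ln (opnorm (eval_word w)) <= ln (M ^+ size w).
    by rewrite ler_ln ?posrE ?exprn_gt0 // upp.
  by rewrite (lnXn _ Mp) mulr_natl.
have lcp : 0 < ln c by apply: ln_gt0.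
have lMp : 0 <= ln M by apply: ln_ge0.
pose lam := 2 * ln M + (ln c)^-1 + 1.
pose K := 2 * ln c + 2 * ln M.
have lamp : 0 < lam.
  by rewrite /lam; have := invr_gt0 (ln c); rewrite lcp => /= h; lra.
exists lam, K; split => //; split; first by rewrite /K; lra.
move=> x y n [wx [Fwx ex]] [wy [Fwy ey]] [[w [Fw sw ew]] G].
have Gw : forall u, word_over F u -> eval_word u = eval_word w -> (size w <= size u)%N.
  by move=> u Fu eu; rewrite sw; apply: G => //; rewrite eu ew.
pose w' := iw w.
have Fw' : word_over F w' by apply: iw_over.
have ew' : eval_word w' = invmx (eval_word w) by apply: iw_eval U Fw.
have Gw' : forall u, word_over F u -> eval_word u = eval_word w' -> (size w' <= size u)%N.
  move=> u Fu eu; rewrite iw_size -(iw_size u); apply: Gw; first exact: iw_over.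
  by rewrite (iw_eval U Fu) eu ew' invmxK.
have ux : x \is a GRing.unit by rewrite -ex; exact: eval_unit U Fwx.
have uy : y \is a GRing.unit by rewrite -ey; exact: eval_unit U Fwy.
have hxy : invmx y *m x = eval_word w'.
  rewrite ew' ew.
  have -> : invmx x *m y = x^-1 * y by [].
  by rewrite -[invmx (x^-1 * y)]/((x^-1 * y)^-1) invrM ?unitrV // invrK.
rewrite /sl3_dist -ew hxy.
have [a1 a2] := lnb w Fw Gw.
have [b1 b2] := lnb w' Fw' Gw'.
move: a1 a2 b1 b2; rewrite /w' iw_size sw.
set a := ln (opnorm (eval_word w)); set b := ln (opnorm (eval_word (iw w))) => a1 a2 b1 b2.
have N0 : 0 <= n%:R :> R by [].
have Nm1 : n%:R - 1 <= n.-1%:R :> R.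
  by case: n {N0 sw G Gw a1 a2 b1 b2} => [|k] /=; [lra | rewrite -addn1 natrD; lra].
have Nm1c : (n%:R - 1) * ln c <= n.-1%:R * ln c by apply: ler_wpM2r => //; apply: ltW.
have llam : 1 <= ln c * lam.
  rewrite /lam !mulrDr mulfV ?gt_eqF //; nra.
have NN : n%:R / lam <= n%:R * ln c.
  by rewrite ler_pdivrMr // -mulrA; nra.
have Nlc : 0 <= n%:R * ln c by apply: mulr_ge0 => //; apply: ltW.
have lam2 : 2 * ln M <= lam.
  by rewrite /lam; have := invr_gt0 (ln c); rewrite lcp => /= h; lra.
have lamN : 2 * ln M * n%:R <= lam * n%:R by apply: ler_wpM2r.
move: Nm1c; rewrite mulrBl mul1r => Nm1c.
split; rewrite /K.
  have h1 : n.-1%:R * ln c <= a + ln M by lra.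
  have h2 : n.-1%:R * ln c <= b + ln M by lra.
  lra.
have h1 : a <= n%:R * ln M by [].
rewrite [lam * _]mulrC in lamN.
lra.
Qed.
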